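(* Let $G=(V,E)$ be a connected simple graph and $\pi:V\to\mathbb{N}$ an injection. For a spanning tree $T$ of $G$ define $w(T)=\sum_{uv\in E(T)}\min(\pi(u),\pi(v))$. If $T^*$ is a spanning tree of $G$ minimizing $w$, then for every edge $uv\in E(T^* )$ with $\pi(u)<\pi(v)$, the pair $(u,v)$ is good with respect to $\pi$; that is, $\pi(u)<\pi(a)$ for every common neighbour $a\in N(u)\cap N(v)$.
   Context: For a vertex $u$, $N(u)=\{v\in V: uv\in E\}$ is its open neighbourhood. Given an injection $\pi:V\to\mathbb{N}$, an ordered pair $(u,v)\in V^2$ is called good with respect to $\pi$ if $uv\in E$, $\pi(u)<\pi(v)$, and $\pi(u)<\pi(w)$ for every $w\in N(u)\cap N(v)$. *)

(* Defs.v *)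
From mathcomp Require Import all_boot.
Set Implicit Arguments. Unset Strict Implicit. Unset Printing Implicit Defensive.

Definition simple_graph (T : finType) (e : rel T) : Prop :=
  symmetric e /\ irreflexive e.

Definition connected_graph (T : finType) (e : rel T) : Prop :=
  forall x y : T, connect e x y.

Definition acyclic (T : finType) (t : rel T) : Prop :=
  forall s : seq T, uniq s -> 2 < size s -> ~~ cycle t s.

Definition spanning_tree (T : finType) (e t : rel T) : Prop :=
  [/\ symmetric t, subrel t e, connected_graph t & acyclic t].

(* w(t) = sum over edges uv of t of min(pi u, pi v); for injective pi each
   unordered edge is counted once, through the ordered pair (u,v) with
   pi u < pi v. *)
Definition tree_weight (T : finType) (pi : T -> nat) (t : rel T) : nat :=
  \sum_(u : T) \sum_(v : T | t u v && (pi u < pi v)) pi u.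

Definition good (T : finType) (e : rel T) (pi : T -> nat) (u v : T) : Prop :=
  [/\ e u v, pi u < pi v &
      forall w : T, e u w -> e v w -> pi u < pi w].

(* Main.v *)
Require Import Defs.
From mathcomp Require Import all_boot.
Set Implicit Arguments. Unset Strict Implicit. Unset Printing Implicit Defensive.

Section Helpers.
Variable T : finType.

Definition E2 (x y : T) : rel T :=
  fun p q => ((p == x) && (q == y)) || ((p == y) && (q == x)).
Arguments E2 : simpl never.

Lemma E2C x y p q : E2 x y p q = E2 x y q p.
Proof. by rewrite /E2 orbC andbC [(q == y) && _]andbC. Qed.

Lemma path_avoid (t0 t1 : rel T) a b :
  (forall p r, t1 p r -> t0 p r || E2 a b p r) ->
  forall z q, path t1 z q -> a \notin q -> (z = a -> forall q', q <> b :: q') ->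
  path t0 z q.
Proof.
move=> H z q; elim: q z => [//|h q IH] z /= /andP[tzh pq].
rewrite in_cons negb_or => /andP[ha aq] hz.
apply/andP; split; last first.
  by apply: IH => // hE; rewrite hE eqxx in ha.
case/orP: (H _ _ tzh) => // /orP[/andP[/eqP zx /eqP hb]|/andP[_ /eqP ha']].
- by case: (hz zx q); rewrite hb.
- by rewrite ha' eqxx in ha.
Qed.

Lemma acyclic_exchange (t0 : rel T) x y :
  symmetric t0 -> acyclic t0 -> ~~ connect t0 x y ->
  acyclic [rel p q | t0 p q || E2 x y p q].
Proof.
move=> st0 ac nc s us ss; apply/negP => cs.
set t1 := [rel p q | t0 p q || E2 x y p q] in cs.
have Ht1 : forall a b, E2 a b =2 E2 x y \/ E2 a b =2 E2 y x ->
   forall p r, t1 p r -> t0 p r || E2 a b p r.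
  move=> a b [] H p r; rewrite /t1 /= H //.
  by case/orP => [->//|]; rewrite /E2 orbC => ->; rewrite orbT.
have avoid : forall a b, E2 a b =2 E2 x y \/ E2 a b =2 E2 y x -> a \notin s -> False.
  move=> a b Hab as'.
  case: s us ss cs as' => [//|z q] us ss cs as'.
  have : cycle t0 (z :: q).
    rewrite /= (path_avoid (Ht1 a b Hab)) //.
    - by rewrite mem_rcons.
    - by move=> za; move: as'; rewrite za mem_head.
  by move/negP: (ac _ us ss).
have xny : x != y by apply: contra nc => /eqP ->; apply: connect0.
have [xs|] := boolP (x \in s); last by apply: avoid; left.
have [ys|] := boolP (y \in s); last by apply: (avoid y x); right => p q; rewrite /E2 orbC.
case: (rot_to xs) => i s' rs.
have ys' : y \in s' by move: ys; rewrite -(mem_rot i) rs in_cons eq_sym (negbTE xny).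
move: rs; case/splitPr: ys' => p1 p2 rs.
have us2 : uniq (x :: p1 ++ y :: p2) by rewrite -rs rot_uniq.
have cs2 : cycle t1 (x :: p1 ++ y :: p2) by rewrite -rs rot_cycle.
have ss2 : 2 < size (x :: p1 ++ y :: p2) by rewrite -rs size_rot.
move: cs2; rewrite /= rcons_cat cat_path /= => /andP[P1 P2].
have P1' : path t1 x (rcons p1 y) by rewrite rcons_path P1; case/andP: P2.
move: us2 => /= /andP[]; rewrite mem_cat in_cons negb_or !negb_or => /and3P[xp1 _ xp2].
rewrite cat_uniq /= => /and3P[_ ]; rewrite negb_or => /andP[yp1 _] /andP[yp2 _].
have P2' : path t1 y (rcons p2 x) by case/andP: P2.
clear rs P1 P2. case: p1 P1' xp1 yp1 ss2 => [|h p1] P1' xp1 yp1 ss2.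
  case: p2 P2' xp2 yp2 ss2 => [|h p2] P2 xp2 yp2 ss2 //.
  have Q : path t0 y (rcons (h :: p2) x).
    apply: (path_avoid (Ht1 y x _)); first by right => ? ?; rewrite /E2 orbC.
    - exact: P2.
    - by rewrite mem_rcons in_cons negb_or eq_sym xny yp2.
    - move=> _ q' [hx _]; move: xp2; by rewrite hx mem_head.
  move/negP: nc; apply; rewrite (sym_connect_sym st0); apply/connectP.
  by exists (rcons (h :: p2) x) => //; rewrite last_rcons.
have Q : path t0 x (rcons (h :: p1) y).
  apply: (path_avoid (Ht1 x y _)) => //; first by left.
  - by rewrite mem_rcons in_cons negb_or xny xp1.
  - by move=> _ q' [hy _]; move: yp1; rewrite hy mem_head.
move/negP: nc; apply; apply/connectP.
by exists (rcons (h :: p1) y) => //; rewrite last_rcons.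
Qed.
End Helpers.

Section W.
Variable T : finType.
Variable pi : T -> nat.

Definition Fw (r : rel T) p q := if r p q && (pi p < pi q) then pi p else 0.

Lemma tw_sum r : tree_weight pi r = \sum_p \sum_q Fw r p q.
Proof. by apply: eq_bigr => p _; rewrite big_mkcond. Qed.

Lemma sum_single (f : T -> T -> nat) x y :
  \sum_(p : T) \sum_(q : T) (if (p == x) && (q == y) then f p q else 0) = f x y.
Proof.
transitivity (\sum_(p : T) (if p == x then f x y else 0)).
  apply: eq_bigr => p _; have [->|px] := eqVneq p x.
    rewrite (bigD1 y) //= !eqxx /= big1 ?addn0 // => q qy.
    by rewrite (negbTE qy).
  by apply: big1.
rewrite (bigD1 x) //= eqxx big1 ?addn0 // => p px; by rewrite (negbTE px).
Qed.

Lemma sumE2 x y : x != y -> \sum_p \sum_q Fw (E2 x y) p q =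
  (if pi x < pi y then pi x else 0) + (if pi y < pi x then pi y else 0).
Proof.
move=> xy.
set g := fun p q => if pi p < pi q then pi p else 0.
transitivity (\sum_(p : T) \sum_(q : T) ((if (p == x) && (q == y) then g p q else 0)
   + (if (p == y) && (q == x) then g p q else 0))).
  apply: eq_bigr => p _; apply: eq_bigr => q _.
  rewrite /Fw /E2 /g.
  have [->|px] := eqVneq p x.
    by rewrite (negbTE xy) /= ?orbF ?addn0; case: (q == y).
  have [->|py] := eqVneq p y.
    by rewrite /= ?add0n; case: (q == x).
  by [].
transitivity (g x y + g y x); last by [].
rewrite -(sum_single g x y) -(sum_single g y x) -big_split /=.
by apply: eq_bigr => p _; rewrite -big_split.
Qed.
End W.

Theorem mainTheorem4 (T : finType) (e : rel T) (pi : T -> nat)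
  (He : simple_graph e) (Hconn : connected_graph e) (Hpi : injective pi)
  (tstar : rel T) (Ht : spanning_tree e tstar)
  (Hmin : forall t : rel T, spanning_tree e t ->
            tree_weight pi tstar <= tree_weight pi t) :
  forall u v : T, tstar u v -> pi u < pi v -> good e pi u v.
Proof.
move=> u v tuv puv.
case: He => se ie; case: Ht => st sub ct ac.
split; [exact: sub | exact: puv |].
move=> a eua eva; rewrite ltnNge; apply/negP => pau0.
have au : a != u by apply: contraTneq eua => ->; rewrite ie.
have pau : pi a < pi u.
  by rewrite ltn_neqAle pau0 andbT; apply: contra au => /eqP /Hpi ->.
have pav : pi a < pi v by apply: ltn_trans puv.
have uv : u != v by apply: contraTneq (sub _ _ tuv) => ->; rewrite ie.
pose t0 := [rel p q | tstar p q && ~~ E2 u v p q].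
have st0 : symmetric t0 by move=> p q; rewrite /= st E2C.
have sub0 : subrel t0 tstar by move=> p q /andP[].
have ac0 : acyclic t0.
  by move=> s us ss; apply: contra (ac s us ss); apply: sub_cycle.
have L1 : ~~ connect t0 u v.
  apply/negP => /connectP [p pp].
  case: (shortenP pp) => p' pp' up' _.
  have := ac (u :: p') up'.
  case: p' pp' up' => [|h [|h' p']] pp' up' /=.
  - by move=> _ vu; rewrite vu eqxx in uv.
  - move=> _ vh; move: pp'; rewrite /= -vh andbT.
    by rewrite /E2 !eqxx andbF.
  - move=> /(_ isT) /negP nc lp; apply: nc.
    have cyc : cycle tstar [:: u, h, h' & p'] by rewrite /cycle rcons_path (sub_path sub0 pp') /= -lp st.
    exact: cyc.
have L2 : forall w, connect t0 u w || connect t0 v w.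
  have aux : forall z p, path tstar z p -> connect t0 u z || connect t0 v z ->
      connect t0 u (last z p) || connect t0 v (last z p).
    move=> z p; elim: p z => [//|h p IH] z /= /andP[tzh pp] H; apply: IH pp _.
    have [E|nE] := boolP (E2 u v z h).
      by case/orP: E => /andP[_ /eqP->]; rewrite connect0 ?orbT.
    have t0zh : t0 z h by rewrite /= tzh nE.
    case/orP: H => H.
      by rewrite (connect_trans H (@connect1 _ t0 _ _ t0zh)).
    by rewrite (connect_trans H (@connect1 _ t0 _ _ t0zh)) orbT.
  move=> w; case/connectP: (ct u w) => p pp ->.
  by apply: aux pp _; rewrite connect0.
have Wt : \sum_p \sum_q Fw pi tstar p q =
    \sum_p \sum_q Fw pi t0 p q + pi u.
  have -> : pi u = \sum_p \sum_q Fw pi (E2 u v) p q.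
    by rewrite sumE2 // puv ltnNge (ltnW puv) addn0.
  rewrite -big_split; apply: eq_bigr => p _; rewrite -big_split.
  apply: eq_bigr => q _; rewrite /Fw /=.
  have [E|nE] := boolP (E2 u v p q).
    have tpq : tstar p q.
      by case/orP: E => /andP[/eqP-> /eqP->] //; rewrite st.
    by rewrite tpq.
  by rewrite andbT addn0.
have key : forall x y, connect t0 u x -> connect t0 y v -> ~~ connect t0 x y ->
    e x y ->
    (if pi x < pi y then pi x else 0) + (if pi y < pi x then pi y else 0) < pi u
    -> False.
  move=> x y cux cyv nxy exy wlt.
  have xy : x != y by apply: contra nxy => /eqP ->; apply: connect0.
  pose t1 := [rel p q | t0 p q || E2 x y p q].
  have st1 : symmetric t1 by move=> p q; have := st0 p q; rewrite /= => ->; rewrite (E2C x y p).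
  have sub01 : subrel t0 t1 by move=> p q H; apply/orP; left.
  have lift : forall p q, connect t0 p q -> connect t1 p q.
    by apply: connect_sub => p q H; apply: connect1; apply: sub01.
  have txy : t1 x y by rewrite /= /E2 !eqxx orbT.
  have cuv : connect t1 u v.
    exact: (connect_trans (lift _ _ cux) (connect_trans (@connect1 _ t1 _ _ txy) (lift _ _ cyv))).
  have cu : forall w, connect t1 u w.
    move=> w; case/orP: (L2 w) => H; first exact: lift.
    exact: connect_trans cuv (lift _ _ H).
  have Hsp : spanning_tree e t1.
    split => //.
    - move=> p q /orP[/sub0 /sub //|].
      by case/orP => /andP[/eqP-> /eqP->] //; rewrite se.
    - move=> p q; apply: connect_trans (cu q).
      by rewrite (sym_connect_sym st1).
    - exact: acyclic_exchange st0 ac0 nxy.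
  have := Hmin _ Hsp; rewrite !tw_sum Wt.
  have W1 : \sum_p \sum_q Fw pi t1 p q <=
      \sum_p \sum_q Fw pi t0 p q + \sum_p \sum_q Fw pi (E2 x y) p q.
    rewrite -big_split; apply: leq_sum => p _; rewrite -big_split.
    apply: leq_sum => q _; rewrite /Fw /=.
    case: (tstar p q && ~~ E2 u v p q); case: (E2 x y p q); case: (pi p < pi q);
    by rewrite /= ?addn0 ?add0n ?leq_addr.
  rewrite sumE2 // in W1.
  move=> H; have := leq_trans H W1.
  by rewrite leq_add2l leqNgt wlt.
have [Ca|Ca] := boolP (connect t0 u a).
  apply: (key a v Ca (connect0 _ _)).
  - by apply: contra L1 => H; apply: connect_trans Ca H.
  - by rewrite se.
  - by rewrite pav (ltnNge (pi v)) (ltnW pav) /= addn0.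
have Da : connect t0 v a by move: (L2 a); rewrite (negbTE Ca).
apply: (key u a (connect0 _ _) _ Ca eua).
  by rewrite (sym_connect_sym st0).
by rewrite (ltnNge (pi u)) (ltnW pau) /= pau add0n.
Qed.
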